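(* Let $H:\mathbb{R}^d\times\mathbb{R}^d\to\mathbb{R}$ be $C^1$, $\alpha_H$-strongly convex in $p$ uniformly in $x$, and set $F=D_pH$, $G=-D_xH$, assumed continuous. If for all $x,y,p,q\in\mathbb{R}^d$, $(F(x,p)-F(y,q))\cdot(p-q)+(G(x,p)-G(y,q))\cdot(x-y)\ge0$, then for all $x,y,p,q\in\mathbb{R}^d$, $(F(x,p)-F(y,q))\cdot(p-q)+(G(x,p)-G(y,q))\cdot(x-y)\ge\alpha_H|p-q|^2$.
   Context: $\alpha_H$-strong convexity in $p$ uniformly in $x$: for every $x$, $p\mapsto H(x,p)-\frac{\alpha_H}2|p|^2$ is convex, with $\alpha_H>0$. *)

(* Defs.v *)
From HB Require Import structures.
From mathcomp Require Import all_boot all_order all_algebra.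
From mathcomp Require Import all_classical all_reals all_analysis.
Set Implicit Arguments. Unset Strict Implicit. Unset Printing Implicit Defensive.
Import Order.TTheory GRing.Theory Num.Theory.
Import numFieldNormedType.Exports.
Local Open Scope ring_scope.

Definition dotv (R : realType) (d : nat) (u v : 'rV[R]_d) : R :=
  \sum_(i < d) u 0 i * v 0 i.

Definition sqnorm (R : realType) (d : nat) (p : 'rV[R]_d) : R := dotv p p.

Definition convex_fun (R : realType) (d : nat) (f : 'rV[R]_d -> R) : Prop :=
  forall (p q : 'rV[R]_d) (t : R), 0 <= t -> t <= 1 ->
    f ((1 - t) *: p + t *: q) <= (1 - t) * f p + t * f q.

(* Main.v *)
Require Import Defs.
From HB Require Import structures.
From mathcomp Require Import all_boot all_order all_algebra.
From mathcomp Require Import all_classical all_reals all_analysis.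
From mathcomp Require Import ring lra.
Import Order.TTheory GRing.Theory Num.Theory.
Import numFieldNormedType.Exports.
Local Open Scope ring_scope.

Section Dot.
Variables (R : realType) (d : nat).
Implicit Types (u v w : 'rV[R]_d) (a : R).

Lemma dotvDl u w v : dotv (u + w) v = dotv u v + dotv w v.
Proof. by rewrite /dotv -big_split; apply: eq_bigr => i _; rewrite mxE mulrDl. Qed.
Lemma dotvC u v : dotv u v = dotv v u.
Proof. by rewrite /dotv; apply: eq_bigr => i _; rewrite mulrC. Qed.
Lemma dotvDr u w v : dotv v (u + w) = dotv v u + dotv v w.
Proof. by rewrite dotvC dotvDl !(dotvC v). Qed.
Lemma dotvZl a u v : dotv (a *: u) v = a * dotv u v.
Proof. by rewrite /dotv mulr_sumr; apply: eq_bigr => i _; rewrite mxE mulrA. Qed.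
Lemma dotvZr a u v : dotv v (a *: u) = a * dotv v u.
Proof. by rewrite dotvC dotvZl dotvC. Qed.
Lemma dotvNl u v : dotv (- u) v = - dotv u v.
Proof. by rewrite -scaleN1r dotvZl mulN1r. Qed.
Lemma dotvNr u v : dotv v (- u) = - dotv v u.
Proof. by rewrite dotvC dotvNl dotvC. Qed.
Lemma dotvBl u w v : dotv (u - w) v = dotv u v - dotv w v.
Proof. by rewrite dotvDl dotvNl. Qed.
Lemma dotvBr u w v : dotv v (u - w) = dotv v u - dotv v w.
Proof. by rewrite dotvDr dotvNr. Qed.
Lemma dotv0r v : dotv v 0 = 0.
Proof. by rewrite -(scale0r 0) dotvZr mul0r. Qed.

Lemma line_derive (f : 'rV[R]_d -> R) (a v : 'rV[R]_d) (z df : R) :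
  is_derive (z *: v + a) v f df -> is_derive z 1 (fun t => f (t *: v + a)) df.
Proof.
move=> [dv dval].
have E : (fun h : R => h^-1 *: (((fun t => f (t *: v + a)) \o shift z) (h *: 1) -
     (fun t => f (t *: v + a)) z)) =
  (fun h : R => h^-1 *: ((f \o shift (z *: v + a)) (h *: v) - f (z *: v + a))).
  by apply: funext => h /=; rewrite scaler1 scalerDl addrA.
split; first by rewrite /derivable E.
by rewrite /derive E.
Qed.
End Dot.

Local Open Scope classical_set_scope.
Lemma concB (R : realType) (d : nat) (H : 'rV[R]_d -> 'rV[R]_d -> R)
  (F G : 'rV[R]_d -> 'rV[R]_d -> 'rV[R]_d) :
  (forall x p u : 'rV[R]_d, is_derive x u (fun y => H y p) (- dotv (G x p) u)) ->
  (forall x y p q : 'rV[R]_d,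
      0 <= dotv (F x p - F y q) (p - q) + dotv (G x p - G y q) (x - y)) ->
  forall p x y, H y p <= H x p - dotv (G x p) (y - x).
Proof.
move=> hG mono p x y.
set v := y - x.
set g := fun t : R => H (t *: v + x) p.
have gd : forall t : R, is_derive t (1:R) g (- dotv (G (t *: v + x) p) v).
  by move=> t; apply: line_derive; apply: hG.
have gc : {within `[0, 1], continuous g}.
  apply: continuous_subspaceT => t.
  apply: differentiable_continuous; apply/derivable1_diffP.
  by have [] := gd t.
have [c /andP[c0 c1] E] := MVT (@ltr01 R) (fun t _ => gd t) gc.
have g1 : g 1 = H y p by rewrite /g scale1r /v subrK.
have g0 : g 0 = H x p by rewrite /g scale0r add0r.
have M := mono (c *: v + x) x p p.
rewrite subrr dotv0r add0r addrK dotvZr dotvBl in M.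
rewrite -g1 -g0.
have : 0 <= dotv (G (c *: v + x) p) v - dotv (G x p) v.
  by rewrite -(pmulr_rge0 _ c0).
move: E; rewrite subr0 mulr1 => E; move=> h; have := E; lra.
Qed.

Lemma convA (R : realType) (d : nat) (alphaH : R) (H : 'rV[R]_d -> 'rV[R]_d -> R)
  (F : 'rV[R]_d -> 'rV[R]_d -> 'rV[R]_d) :
  (forall x p v : 'rV[R]_d, is_derive p v (H x) (dotv (F x p) v)) ->
  (forall x : 'rV[R]_d, convex_fun (fun p => H x p - alphaH / 2 * sqnorm p)) ->
  forall x p q, H x p + dotv (F x p) (q - p) + alphaH / 2 * sqnorm (q - p) <= H x q.
Proof.
move=> hF cv x p q.
set v := q - p.
have [dv dval] := hF x p v.
set k := (fun h : R => h^-1 *: ((H x \o shift p) (h *: v) - H x p)).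
have kc : k @ (0:R)^' --> dotv (F x p) v.
  by rewrite -dval; apply: dv.
have kr : k @ (0:R)^'+ --> dotv (F x p) v.
  apply: cvg_trans kc => A /= [e e0 hA]; exists e => // y ye y0.
  by apply: hA => //; rewrite gt_eqF.
set m := fun h : R => k h + alphaH / 2 * (1 - h) * sqnorm v.
have mr : m @ (0:R)^'+ --> dotv (F x p) v + alphaH / 2 * (1 - 0) * sqnorm v.
  apply: cvgD => //; apply: cvg_at_right_filter.
  apply: cvgM; last exact: cvg_cst.
  apply: cvgM; first exact: cvg_cst.
  by apply: cvgB; [exact: cvg_cst | exact: cvg_id].
have : dotv (F x p) v + alphaH / 2 * (1 - 0) * sqnorm v <= H x q - H x p.
  apply: (cvgr_to_le mr).
  near=> h.
  have h0 : 0 < h by near: h; exact: nbhs_right_gt.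
  have h1 : h <= 1 by near: h; exact: nbhs_right_le.
  have C := cv x p q h (ltW h0) h1.
  have E1 : (1 - h) *: p + h *: q = h *: v + p.
    by rewrite /v scalerBr scalerBl scale1r addrAC [RHS]addrC addrA.
  have E2 : sqnorm ((1 - h) *: p + h *: q) =
     (1 - h) * sqnorm p + h * sqnorm q - h * (1 - h) * sqnorm v.
    rewrite /sqnorm /v !dotvDl !dotvDr ?dotvNl ?dotvNr ?dotvDl ?dotvZl ?dotvZr ?dotvNl ?dotvNr (@dotvC R d q p).
    ring.
  rewrite E2 E1 in C.
  have K : (H x (h *: v + p) - H x p) / h <= H x q - H x p - alphaH / 2 * (1 - h) * sqnorm v.
    rewrite ler_pdivrMr //; nra.
  rewrite /m /k /= [_ *: _]mulrC; lra.
rewrite subr0 mulr1 => ?; lra.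
Unshelve. all: by end_near.
Qed.

Theorem lemma4p11 (R : realType) (d : nat) (alphaH : R)
  (H : 'rV[R]_d -> 'rV[R]_d -> R) (F G : 'rV[R]_d -> 'rV[R]_d -> 'rV[R]_d) :
  0 < alphaH ->
  (* F = D_p H *)
  (forall x p v : 'rV[R]_d, is_derive p v (H x) (dotv (F x p) v)) ->
  (* G = - D_x H *)
  (forall x p u : 'rV[R]_d, is_derive x u (fun y => H y p) (- dotv (G x p) u)) ->
  (* F and G continuous (hence H is C^1) *)
  continuous (fun z : 'rV[R]_d * 'rV[R]_d => F z.1 z.2) ->
  continuous (fun z : 'rV[R]_d * 'rV[R]_d => G z.1 z.2) ->
  (* alphaH-strong convexity in p, uniformly in x *)
  (forall x : 'rV[R]_d, convex_fun (fun p => H x p - alphaH / 2 * sqnorm p)) ->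
  (forall x y p q : 'rV[R]_d,
      0 <= dotv (F x p - F y q) (p - q) + dotv (G x p - G y q) (x - y)) ->
  forall x y p q : 'rV[R]_d,
    alphaH * sqnorm (p - q)
      <= dotv (F x p - F y q) (p - q) + dotv (G x p - G y q) (x - y).
Proof.
move=> a0 hF hG _ _ cv mono x y p q.
have A1 := @convA R d alphaH H F hF cv x p q.
have A2 := @convA R d alphaH H F hF cv y q p.
have B1 := @concB R d H F G hG mono p x y.
have B2 := @concB R d H F G hG mono q y x.
have Eqp : q - p = - (p - q) by rewrite opprB.
have Eyx : y - x = - (x - y) by rewrite opprB.
rewrite Eqp Eyx /sqnorm !dotvNr !dotvNl opprK in A1 A2 B1 B2 *.
set s := dotv (p - q) (p - q) in A1 A2 *.
rewrite !dotvBl.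
lra.
Qed.
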